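(* Let $\{\mathbf{x}_k\}_{k=0}^{K}$ be the sequence generated by the CG-BiO algorithm. Then for any $k\geq 0$, $f(\mathbf{x}_{k+1})\leq f(\mathbf{x}_k)-\gamma_k \mathcal{G}(\mathbf{x}_k) +\frac{1}{2}\gamma_k^2L_f D^2$ and $g(\mathbf{x}_{k+1})\leq (1-\gamma_k) g(\mathbf{x}_k)+\gamma_k g(\mathbf{x}_0) +\frac{1}{2}\gamma_k^2 L_g D^2$.
   Context: Consider the simple bilevel problem $\min_{\mathbf{x}\in\mathbb{R}^d} f(\mathbf{x})$ s.t. $\mathbf{x}\in \operatorname*{arg\,min}_{\mathbf{z}\in\mathcal{Z}} g(\mathbf{z})$. Assume: $\mathcal{Z}\subset\mathbb{R}^d$ is convex and compact with diameter $D$ in a norm $\|\cdot\|$ (dual norm $\|\cdot\|_*$); $g$ is convex and continuously differentiable on an open set containing $\mathcal{Z}$ with $L_g$-Lipschitz gradient on $\mathcal{Z}$; $f$ is continuously differentiable with $L_f$-Lipschitz gradient. Let $g^*=\min_{\mathbf{z}\in\mathcal{Z}}g(\mathbf{z})$ and $\mathcal{X}_g^*=\operatorname*{arg\,min}_{\mathbf{z}\in\mathcal{Z}}g(\mathbf{z})$. The CG-BiO algorithm: choose $\mathbf{x}_0\in\mathcal{Z}$ with $g(\mathbf{x}_0)-g^*\le \epsilon_g/2$; at iteration $k$, let $\mathcal{X}_k=\{\mathbf{s}\in\mathcal{Z}: \langle\nabla g(\mathbf{x}_k),\mathbf{s}-\mathbf{x}_k\rangle\le g(\mathbf{x}_0)-g(\mathbf{x}_k)\}$,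 compute $\mathbf{s}_k\in\operatorname*{arg\,min}_{\mathbf{s}\in\mathcal{X}_k}\langle\nabla f(\mathbf{x}_k),\mathbf{s}\rangle$ and set $\mathbf{x}_{k+1}=(1-\gamma_k)\mathbf{x}_k+\gamma_k\mathbf{s}_k$ with stepsize $\gamma_k\in[0,1]$. The Frank–Wolfe gap is $\mathcal{G}(\mathbf{x})=\max_{\mathbf{s}\in\mathcal{X}_g^*}\langle\nabla f(\mathbf{x}),\mathbf{x}-\mathbf{s}\rangle$. *)

(* Defs.v *)
From HB Require Import structures.
From mathcomp Require Import all_boot all_order all_algebra.
From mathcomp Require Import all_classical all_reals all_analysis.
Set Implicit Arguments. Unset Strict Implicit. Unset Printing Implicit Defensive.
Import Order.TTheory GRing.Theory Num.Theory.
Import numFieldNormedType.Exports.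
Local Open Scope classical_set_scope.
Local Open Scope ring_scope.

Section Defs.
Variables (R : realType) (d : nat).
Notation V := 'rV[R]_d.

Definition inner (u v : V) : R := \sum_(i < d) u ord0 i * v ord0 i.

Definition is_norm (N : V -> R) : Prop :=
  [/\ forall x, N x = 0 -> x = 0,
      forall (a : R) x, N (a *: x) = `|a| * N x
    & forall x y, N (x + y) <= N x + N y].

Definition dual_norm (N : V -> R) (y : V) : R :=
  sup [set inner y x | x in [set x | N x <= 1]].

Definition diam (N : V -> R) (Z : set V) : R :=
  sup [set r | exists x y, [/\ Z x, Z y & r = N (x - y)]].

Definition convex_fun_on (g : V -> R) (Z : set V) : Prop :=
  forall x y (t : R), Z x -> Z y -> 0 <= t <= 1 ->
    g ((1 - t) *: x + t *: y) <= (1 - t) * g x + t * g y.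

Definition gstar (g : V -> R) (Z : set V) : R := inf (g @` Z).

Definition argmin_set (g : V -> R) (Z : set V) : set V :=
  [set z | Z z /\ g z = gstar g Z].

Definition fw_gap (gradf : V -> V) (Xs : set V) (x : V) : R :=
  sup [set inner (gradf x) (x - s) | s in Xs].

Definition cut_set (g : V -> R) (gradg : V -> V) (Z : set V) (x0 xk : V) : set V :=
  [set s | Z s /\ inner (gradg xk) (s - xk) <= g x0 - g xk].

End Defs.

(* Main.v *)
Require Import Defs.
From HB Require Import structures.
From mathcomp Require Import all_boot all_order all_algebra.
From mathcomp Require Import all_classical all_reals all_analysis.
From mathcomp Require Import lra ring.
Import Order.TTheory GRing.Theory Num.Theory.
Import numFieldNormedType.Exports.
Local Open Scope classical_set_scope.
Local Open Scope ring_scope.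

Lemma near_bound (R : realType) (V : normedModType R) (h : V -> R) (A : set V) x (a : R) :
  0 <= a ->
  (forall y, A y -> `|h y - h x| <= a * `|x - y| + a * `|x - y| ^+ 2) ->
  forall e, 0 < e -> nbhs x (fun y => A y -> `|h x - h y| <= e).
Proof.
move=> a0 hb e e0.
pose del := Num.min 1 (e / (2 * (a + 1))).
have del0 : 0 < del by rewrite lt_min ltr01 /= divr_gt0 // mulr_gt0 // ltr_wpDl.
apply/nbhs_ballP; exists del => // y; rewrite -ball_normE /= => hy Ay.
rewrite distrC; apply: (le_trans (hb y Ay)).
have n0 : 0 <= `|x - y| by [].
have h1 : `|x - y| < 1 by apply: (lt_le_trans hy); rewrite ge_min lexx.
have h2 : `|x - y| < e / (2 * (a + 1)).
  by apply: (lt_le_trans hy); rewrite ge_min lexx orbT.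
have h3 : `|x - y| * (2 * (a + 1)) < e.
  by rewrite -ltr_pdivlMr // mulr_gt0 // ltr_wpDl.
set n := `|x - y| in n0 h1 h2 h3 *.
nra.
Qed.

Lemma cont_bound (R : realType) (V : normedModType R) (h : V -> R) (A : set V) x (a : R) :
  0 <= a ->
  (forall y, A y -> `|h y - h x| <= a * `|x - y| + a * `|x - y| ^+ 2) ->
  h @ within A (nbhs x) --> h x.
Proof.
move=> a0 hb; apply/cvgrPdist_le => e e0.
rewrite near_withinE.
exact: (@near_bound _ _ h A x a a0 hb e e0).
Qed.

Lemma cont_bound_T (R : realType) (V : normedModType R) (h : V -> R) x (a : R) :
  0 <= a ->
  (forall y, `|h y - h x| <= a * `|x - y| + a * `|x - y| ^+ 2) ->
  h @ x --> h x.
Proof.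
move=> a0 hb; apply/cvgrPdist_le => e e0.
have := @near_bound _ _ h setT x a a0 (fun y _ => hb y) e e0.
by apply: filterS => y /(_ I).
Qed.

Lemma poly_der (R : realType) (c q t : R) :
  is_derive t 1 (fun s : R => c * s + q * (s * s)) (c + q * (2 * t)).
Proof.
have -> : (fun s : R => c * s + q * (s * s)) = (c \*: (@id R)) + (q \*: ((@id R) * (@id R))).
  by apply/funext => s.
apply: is_derive_eq.
by change (c * 1 + q * (t * 1 + t * 1) = c + q * (2 * t)); ring.
Qed.

Lemma line_derive (R : realType) d (F : 'rV[R]_d -> R) x v t l :
  is_derive (x + t *: v) v F l -> is_derive t 1 (fun s : R => F (x + s *: v)) l.
Proof.
case => Hd Hv.
have E : (fun h : R => h^-1 *: (((fun s : R => F (x + s *: v)) \o shift t) (h *: 1) - F (x + t *: v)))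
  = (fun h : R => h^-1 *: ((F \o shift (x + t *: v)) (h *: v) - F (x + t *: v))).
  apply/funext => h /=; congr (_ *: (F _ - _)).
  have -> : h%:A = h by exact: mulr1.
  apply/rowP => i; rewrite !mxE; ring.
constructor; first by rewrite /derivable E.
by rewrite /derive E.
Qed.

Section NormFacts.
Variables (R : realType) (d : nat) (N : 'rV[R]_d -> R).
Hypothesis hN : is_norm N.
Notation V := 'rV[R]_d.

Lemma N0 : N 0 = 0.
Proof. case: hN => _ hZ _; by rewrite -(scale0r (0:V)) hZ normr0 mul0r. Qed.

Lemma NN x : N (- x) = N x.
Proof. case: hN => _ hZ _; by rewrite -scaleN1r hZ normrN normr1 mul1r. Qed.

Lemma Nge0 x : 0 <= N x.
Proof.
case: hN => _ _ hT; have := hT x (- x); rewrite subrr N0 NN.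
move=> H; lra.
Qed.

Lemma NZ a x : N (a *: x) = `|a| * N x.
Proof. by case: hN. Qed.

Lemma ND x y : N (x + y) <= N x + N y.
Proof. by case: hN. Qed.

Lemma NB x y : N (x - y) = N (y - x).
Proof. by rewrite -NN opprB. Qed.

Lemma coord_le (x : V) i : `|x ord0 i| <= `|x|.
Proof.
have -> : `|x| = mx_norm x by [].
rewrite mx_normrE.
by apply: (le_trans _ (le_bigmax _ _ (ord0, i))).
Qed.

Lemma Nsum (I : Type) (r : seq I) (F : I -> V) :
  N (\sum_(i <- r) F i) <= \sum_(i <- r) N (F i).
Proof.
elim: r => [|a r IH]; first by rewrite !big_nil N0.
rewrite !big_cons; apply: (le_trans (ND _ _)); exact: lerD.
Qed.

Definition Cn := \sum_(i < d) N (delta_mx ord0 i).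

Lemma N_le_Cn x : N x <= Cn * `|x|.
Proof.
have E : x = \sum_(i < d) x ord0 i *: delta_mx ord0 i.
  apply/rowP => j; rewrite summxE.
  rewrite (bigD1 j) //= big1 ?addr0; first by rewrite !mxE eqxx /= mulr1.
  by move=> k kj; rewrite !mxE eqxx /= eq_sym (negbTE kj) mulr0.
rewrite {1}E; apply: le_trans; first exact: Nsum.
rewrite /Cn mulr_suml; apply: ler_sum => i _.
rewrite NZ mulrC.
by rewrite ler_wpM2l ?Nge0 ?coord_le.
Qed.

Lemma Cn_ge0 : 0 <= Cn.
Proof. by apply: sumr_ge0 => i _; exact: Nge0. Qed.

Lemma N_cont : continuous N.
Proof.
move=> x; apply: (@cont_bound_T _ _ N x Cn Cn_ge0) => y.
have t1 : N y - N x <= Cn * `|x - y|.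
  have := ND (y - x) x; rewrite subrK => H.
  rewrite distrC; apply: (le_trans _ (N_le_Cn (y - x))); lra.
have t2 : N x - N y <= Cn * `|x - y|.
  have := ND (x - y) y; rewrite subrK => H.
  apply: (le_trans _ (N_le_Cn (x - y))); lra.
have : 0 <= Cn * `|x - y| ^+ 2 by rewrite mulr_ge0 ?Cn_ge0 // exprn_ge0.
rewrite ler_norml; lra.
Qed.

Lemma N_pos x : x != 0 -> 0 < N x.
Proof.
move=> x0; rewrite lt_def Nge0 andbT; apply/eqP => H.
case: hN => h0 _ _; by move: x0; rewrite (h0 x H) eqxx.
Qed.

Lemma Nequiv : exists2 m, 0 < m & forall x, m * `|x| <= N x.
Proof.
pose S := [set x : V | `|x| = 1].
have [S0|/set0P S0] := eqVneq S set0.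
  exists 1 => // x; rewrite mul1r.
  have [->|x0] := eqVneq x 0; first by rewrite normr0 Nge0.
  exfalso; have : S (`|x|^-1 *: x) by rewrite /S /= normfZV.
  by rewrite S0.
have cS : compact S.
  apply: bounded_closed_compact.
    rewrite /bounded_set /=; apply: filterS (nbhs_pinfty_ge (r:=1) _) => //.
    by move=> M hM y /= ->.
  have -> : S = (Num.norm : V -> R) @^-1` [set 1] by [].
  move/continuous_closedP: (@norm_continuous _ V); apply.
  exact: closed_eq.
have cN : {within S, continuous N} by apply: continuous_subspaceT; exact: N_cont.
have [c cS' cmin] := compact_EVT_min S0 cS cN.
have c0 : c != 0.
  apply/eqP => c0; move: cS'; rewrite inE /S /= c0 normr0 => /eqP.
  by rewrite eq_sym oner_eq0.
exists (N c); first exact: N_pos.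
move=> x; have [->|x0] := eqVneq x 0; first by rewrite normr0 mulr0 Nge0.
have := cmin (`|x|^-1 *: x); rewrite inE /S /= normfZV // => /(_ erefl).
rewrite NZ normfV normr_id => H.
have nx : 0 < `|x| by rewrite normr_gt0.
by rewrite -ler_pdivlMr // mulrC.
Qed.

Lemma inner_bound (w v : V) : `|inner w v| <= (\sum_(i < d) `|w ord0 i|) * `|v|.
Proof.
rewrite /inner mulr_suml; apply: (le_trans (ler_norm_sum _ _ _)).
apply: ler_sum => i _; rewrite normrM ler_wpM2l //; exact: coord_le.
Qed.

Lemma dual_has_sup w : has_sup [set inner w x | x in [set x | N x <= 1]].
Proof.
have [m m0 hm] := Nequiv.
split; first by exists (inner w 0), 0 => //=; rewrite N0.
exists ((\sum_(i < d) `|w ord0 i|) / m) => _ [x /= Nx <-].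
apply: (le_trans (ler_norm _)); apply: (le_trans (inner_bound _ _)).
rewrite ler_pdivlMr // -mulrA.
set Sw := \sum_(i < d) _.
rewrite -[X in _ <= X]mulr1 ler_wpM2l ?sumr_ge0 //.
by rewrite mulrC; exact: le_trans (hm x) Nx.
Qed.

Lemma dual_ineq w v : inner w v <= dual_norm N w * N v.
Proof.
have [->|v0] := eqVneq v 0.
  rewrite N0 mulr0 /inner big1 // => i _; by rewrite mxE mulr0.
have nv := N_pos _ v0.
have : inner w ((N v)^-1 *: v) <= dual_norm N w.
  apply: (sup_upper_bound (dual_has_sup w)); exists ((N v)^-1 *: v) => //=.
  by rewrite NZ ger0_norm ?invr_ge0 ?Nge0 // mulVf // gt_eqF.
have -> : inner w ((N v)^-1 *: v) = (N v)^-1 * inner w v.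
  by rewrite /inner mulr_sumr; apply: eq_bigr => i _; rewrite mxE mulrCA.
by rewrite ler_pdivrMl // mulrC.
Qed.

Lemma dual_ge0 w : 0 <= dual_norm N w.
Proof.
apply: (le_trans _ (sup_upper_bound (dual_has_sup w) _)); last first.
  by exists 0 => //=; rewrite N0.
by rewrite /inner big1 // => i _; rewrite mxE mulr0.
Qed.

Lemma innerBl (a b v : V) : inner (a - b) v = inner a v - inner b v.
Proof. by rewrite /inner -sumrB; apply: eq_bigr => i _; rewrite !mxE mulrBl. Qed.

Lemma descent (F : V -> R) (G : V -> V) (L : R) x v :
  (forall t, 0 <= t <= 1 -> is_derive (x + t *: v) v F (inner (G (x + t *: v)) v)) ->
  (forall t, 0 <= t <= 1 -> dual_norm N (G (x + t *: v) - G x) <= L * N (t *: v)) ->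
  F (x + v) <= F x + inner (G x) v + 2^-1 * L * N v ^+ 2.
Proof.
move=> hd hL.
set c := inner (G x) v; set q := 2^-1 * L * N v ^+ 2.
pose phi := fun s : R => F (x + s *: v).
pose p := fun s : R => c * s + q * (s * s).
pose psi : R -> R := phi - p.
have dpsi (t : R) : 0 <= t <= 1 ->
    is_derive t 1 psi (inner (G (x + t *: v)) v - (c + q * (2 * t))).
  move=> ht; apply: is_deriveB; [exact: line_derive (hd t ht) | exact: poly_der].
have cont : {within `[0, 1], continuous psi}.
  apply: derivable_within_continuous => t; rewrite in_itv /= => ht.
  by case: (dpsi t ht).
have dpsi' : forall t : R, t \in `]0, 1[ -> is_derive t 1 psi
    ((fun t => inner (G (x + t *: v)) v - (c + q * (2 * t))) t).
  move=> t; rewrite in_itv /= => /andP[h0 h1]; apply: dpsi.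
  by rewrite !ltW.
have [z hz E] := MVT_segment ler01 dpsi' cont.
move: hz; rewrite in_itv /= => /andP[z0 z1].
move: E; rewrite /psi /phi /p /=.
change (F (x + 1 *: v) - (c * 1 + q * (1 * 1)) - (F (x + 0 *: v) - (c * 0 + q * (0 * 0)))
  = (inner (G (x + z *: v)) v - (c + q * (2 * z))) * (1 - 0) -> F (x + v) <= F x + c + q).
rewrite scale1r scale0r addr0 subr0 !mulr1 !mulr0 addr0 subr0 => E.
have key : inner (G (x + z *: v)) v - c <= L * z * N v ^+ 2.
  rewrite /c -innerBl; apply: le_trans; first exact: dual_ineq.
  have hz : 0 <= z <= 1 by rewrite z0 z1.
  apply: (le_trans (ler_wpM2r (Nge0 v) (hL z hz))).
  by rewrite NZ ger0_norm // expr2 !mulrA.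
have qz : q * (2 * z) = L * z * N v ^+ 2.
  by rewrite /q; field.
rewrite qz in E; lra.
Qed.

Lemma innerBr (w a b : V) : inner w (a - b) = inner w a - inner w b.
Proof. by rewrite /inner -sumrB; apply: eq_bigr => i _; rewrite !mxE mulrBr. Qed.

Lemma innerZr (w v : V) (a : R) : inner w (a *: v) = a * inner w v.
Proof.
by rewrite /inner mulr_sumr; apply: eq_bigr => i _; rewrite !mxE mulrCA.
Qed.

End NormFacts.
Arguments N0 {R d N}.
Arguments NN {R d N}.
Arguments Nge0 {R d N}.
Arguments NZ {R d N}.
Arguments ND {R d N}.
Arguments NB {R d N}.
Arguments Nsum {R d N}.
Arguments Cn {R d N}.
Arguments N_le_Cn {R d N}.
Arguments Cn_ge0 {R d N}.
Arguments N_cont {R d N}.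
Arguments N_pos {R d N}.
Arguments Nequiv {R d N}.
Arguments dual_has_sup {R d N}.
Arguments dual_ineq {R d N}.
Arguments dual_ge0 {R d N}.
Arguments descent {R d N}.
Arguments coord_le {R d}.


Lemma right_of_punct (R : realType) (W : topologicalType) (f : R -> W) (l : W) :
  f @ 0^' --> l -> f @ 0^'+ --> l.
Proof.
move=> H; apply: cvg_trans H => P /=.
rewrite /at_right /dnbhs /within /=.
rewrite !nbhs_filterE /= => hP.
move: hP; apply: filterS => u hu u0; apply: hu; by rewrite gt_eqF.
Qed.

Lemma conv_grad (R : realType) d (g : 'rV[R]_d -> R) (Z : set 'rV[R]_d) y z l :
  convex_fun_on g Z -> Z y -> Z z -> is_derive y (z - y) g l ->
  g y + l <= g z.
Proof.
move=> cg Zy Zz [Hd Hv].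
have H := @right_of_punct _ _ _ _ Hd.
rewrite -Hv; rewrite -lerBrDl; apply: (cvgr_to_le H).
near=> h.
have h0 : 0 < h by near: h; exact: nbhs_right_gt.
have h1 : h < 1 by near: h; exact: nbhs_right_lt.
have := cg y z h Zy Zz; rewrite (ltW h0) (ltW h1) => /(_ erefl).
have -> : (1 - h) *: y + h *: z = h *: (z - y) + y.
  by apply/rowP => i; rewrite !mxE; ring.
move=> hc /=; rewrite ler_pdivrMl //; lra.
Unshelve. all: by end_near.
Qed.

Theorem lemma2 (R : realType) (d : nat)
  (N : 'rV[R]_d -> R) (Z U : set 'rV[R]_d) (D : R)
  (f g : 'rV[R]_d -> R) (gradf gradg : 'rV[R]_d -> 'rV[R]_d) (Lf Lg : R)
  (eps_g : R) (K : nat) (x s : nat -> 'rV[R]_d) (gamma : nat -> R) :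
  is_norm N ->
  (* Z convex, compact, with diameter D *)
  convex_set Z -> compact Z -> D = diam N Z ->
  (* g convex, C^1 on an open set U containing Z, L_g-Lipschitz gradient on Z *)
  convex_fun_on g Z ->
  open U -> Z `<=` U ->
  (forall y v, U y -> is_derive y v g (inner (gradg y) v)) ->
  (forall y, U y -> {for y, continuous gradg}) ->
  (forall y z, Z y -> Z z -> dual_norm N (gradg y - gradg z) <= Lg * N (y - z)) ->
  (* f C^1 with L_f-Lipschitz gradient *)
  (forall y v, is_derive y v f (inner (gradf y) v)) ->
  continuous gradf ->
  (forall y z, dual_norm N (gradf y - gradf z) <= Lf * N (y - z)) ->
  (* CG-BiO iterates *)
  Z (x 0%N) -> g (x 0%N) - gstar g Z <= eps_g / 2 ->
  (forall k, (k < K)%N ->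
     [/\ cut_set g gradg Z (x 0%N) (x k) (s k),
         (forall s', cut_set g gradg Z (x 0%N) (x k) s' ->
            inner (gradf (x k)) (s k) <= inner (gradf (x k)) s'),
         0 <= gamma k <= 1
       & x k.+1 = (1 - gamma k) *: x k + gamma k *: s k]) ->
  forall k, (k < K)%N ->
    f (x k.+1) <= f (x k) - gamma k * fw_gap gradf (argmin_set g Z) (x k)
                  + 2^-1 * gamma k ^+ 2 * Lf * D ^+ 2
    /\ g (x k.+1) <= (1 - gamma k) * g (x k) + gamma k * g (x 0%N)
                  + 2^-1 * gamma k ^+ 2 * Lg * D ^+ 2.

Proof.
move=> hN cZ compZ hD cg oU ZU dg cgg hLg df cgf hLf Zx0 hx0 iter.
have segZ : forall a b (t : R), Z a -> Z b -> 0 <= t <= 1 -> Z (a + t *: (b - a)).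
  move=> a b t Za Zb /andP[t0 t1].
  have := cZ b a (Itv01 t0 t1) (mem_set Zb) (mem_set Za); rewrite inE.
  congr Z; apply/rowP => i; rewrite !mxE /= /unstable.onem; ring.
have xZ : forall k, (k <= K)%N -> Z (x k).
  elim => [//|k IH] hk.
  have [[Zs _] _ /andP[g0 g1] ->] := iter k hk.
  have -> : (1 - gamma k) *: x k + gamma k *: s k = x k + gamma k *: (s k - x k).
    by apply/rowP => i; rewrite !mxE; ring.
  apply: segZ => //; first by apply: IH; exact: ltnW.
  by rewrite g0 g1.
move=> k hk.
have [[Zs hcut] hmin /andP[g0 g1] hx] := iter k hk.
have Zxk : Z (x k) by apply: xZ; exact: ltnW.
set v := gamma k *: (s k - x k).
have xk1 : x k.+1 = x k + v by rewrite hx /v; apply/rowP => i; rewrite !mxE; ring.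
have [M [_ hM]] := compact_bounded compZ.
have ZM : forall y, Z y -> `|y| <= M + 1.
  move=> y Zy; apply: (hM (M + 1)) => //; by rewrite ltrDl.
have Dhs : has_sup [set r | exists x y, [/\ Z x, Z y & r = N (x - y)]].
  split; first by exists (N (x 0%N - x 0%N)), (x 0%N), (x 0%N).
  exists (@Cn R d N * (2 * (M + 1))) => _ [a [b [Za Zb ->]]].
  apply: le_trans (@N_le_Cn R d N hN _) _; apply: ler_wpM2l; first exact: Cn_ge0.
  apply: le_trans (ler_normB _ _) _; have := ZM a Za; have := ZM b Zb; lra.
have Dub : forall a b, Z a -> Z b -> N (a - b) <= D.
  by move=> a b Za Zb; rewrite hD; apply: (sup_upper_bound Dhs); exists a, b.
have Nsx0 := Nge0 hN (s k - x k).
have NsxD : N (s k - x k) <= D by apply: Dub.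
have Nv : N v = gamma k * N (s k - x k) by rewrite /v NZ // ger0_norm.
have Lpos : forall (L : R) (G : 'rV[R]_d -> 'rV[R]_d),
    (forall a b, Z a -> Z b -> dual_norm N (G a - G b) <= L * N (a - b)) ->
    forall a b, Z a -> Z b -> a <> b -> 0 <= L.
  move=> L G hL a b Za Zb ab.
  have := le_trans (dual_ge0 hN _) (hL a b Za Zb).
  have hp : 0 < N (a - b) by apply: N_pos => //; rewrite subr_eq0; apply/eqP.
  by rewrite pmulr_lge0.
have quad : forall (L : R) (G : 'rV[R]_d -> 'rV[R]_d),
    (forall a b, Z a -> Z b -> dual_norm N (G a - G b) <= L * N (a - b)) ->
    L * N v ^+ 2 <= gamma k ^+ 2 * L * D ^+ 2.
  move=> L G hL.
  have [ex|nex] := pselect (exists a b, [/\ Z a, Z b & a <> b]).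
    have [a [b [Za Zb ab]]] := ex.
    have L0 := Lpos L G hL a b Za Zb ab.
    rewrite Nv exprMn mulrCA -mulrA ler_wpM2l ?sqr_ge0 //.
    by rewrite ler_wpM2l // ler_pM.
  have esx : s k = x k.
    by apply: contrapT => ne; apply: nex; exists (s k), (x k).
  have D0 : D = 0.
    apply/le_anti/andP; split; last by rewrite -(N0 hN) -(subrr (x k)); apply: Dub.
    rewrite hD; apply: ge_sup; first by exists (N (x k - x k)), (x k), (x k).
    move=> _ [a [b [Za Zb ->]]].
    have -> : a = b by apply: contrapT => ne; apply: nex; exists a, b.
    by rewrite subrr N0.
  rewrite /v esx subrr scaler0 (N0 hN) D0; lra.
have seg_tv : forall t : R, 0 <= t <= 1 -> Z (x k + t *: v).
  move=> t /andP[t0 t1]; rewrite /v scalerA; apply: segZ => //.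
  by rewrite mulr_ge0 //= mulr_ile1.
have tvB : forall t : R, x k + t *: v - x k = t *: v.
  by move=> t; rewrite addrAC subrr add0r.
have fd : f (x k + v) <= f (x k) + inner (gradf (x k)) v + 2^-1 * Lf * N v ^+ 2.
  apply: (descent hN f gradf Lf (x k) v) => t ht.
  by rewrite -[X in _ <= _ * N X](tvB t).
have gd : g (x k + v) <= g (x k) + inner (gradg (x k)) v + 2^-1 * Lg * N v ^+ 2.
  apply: (descent hN g gradg Lg (x k) v) => t ht.
    by apply: dg; apply: ZU; exact: seg_tv.
  by rewrite -[X in _ <= _ * N X](tvB t); apply: hLg => //; exact: seg_tv.
have ginc : inner (gradg (x k)) v <= gamma k * (g (x 0%N) - g (x k)).
  by rewrite /v innerZr ler_wpM2l.
have qf := quad Lf gradf (fun a b _ _ => hLf a b).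
have qg := quad Lg gradg hLg.
split; last first.
  rewrite xk1.
  have -> : 2^-1 * gamma k ^+ 2 * Lg * D ^+ 2 = 2^-1 * (gamma k ^+ 2 * Lg * D ^+ 2) by ring.
  have e1 : 2^-1 * Lg * N v ^+ 2 = 2^-1 * (Lg * N v ^+ 2) by ring.
  rewrite e1 in gd.
  have e2 : gamma k * (g (x 0%N) - g (x k)) = gamma k * g (x 0%N) - gamma k * g (x k) by ring.
  rewrite e2 in ginc.
  have e3 : (1 - gamma k) * g (x k) = g (x k) - gamma k * g (x k) by ring.
  rewrite e3.
  move: gd ginc qg.
  set A := Lg * N v ^+ 2; set B := gamma k ^+ 2 * Lg * D ^+ 2.
  set I := inner _ v; set a := gamma k * g (x 0%N); set b := gamma k * g (x k).
  move=> *; lra.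
have tvB' : forall (a w : 'rV[R]_d) (u : R), a + u *: w - a = u *: w.
  by move=> a w u; rewrite addrAC subrr add0r.
have gcont : {within Z, continuous g}.
  apply/subspace_continuousP => t Zt.
  set W := \sum_(i < d) `|gradg t ord0 i|.
  set C := @Cn R d N.
  have W0 : 0 <= W by apply: sumr_ge0.
  have C0 : 0 <= C := Cn_ge0 hN.
  apply: (@cont_bound _ _ g Z t (W + `|Lg| * C ^+ 2)) => [|y Zy].
    by rewrite addr_ge0 // mulr_ge0 // exprn_ge0.
  have low := @conv_grad R d g Z t y _ cg Zt Zy (dg t (y - t) (ZU _ Zt)).
  have up : g (t + (y - t)) <= g t + inner (gradg t) (y - t) + 2^-1 * Lg * N (y - t) ^+ 2.
    apply: (descent hN g gradg Lg t (y - t)) => u hu.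
      by apply: dg; apply: ZU; exact: segZ.
    by rewrite -[X in _ <= _ * N X](tvB' t (y - t) u); apply: hLg => //; exact: segZ.
  rewrite addrC subrK in up.
  have hI : `|inner (gradg t) (y - t)| <= W * `|t - y|.
    by rewrite distrC; exact: inner_bound.
  have hNn : N (y - t) <= C * `|t - y| by rewrite distrC; exact: N_le_Cn.
  have hP : N (y - t) ^+ 2 <= C ^+ 2 * `|t - y| ^+ 2.
    by rewrite -exprMn expr2 [X in _ <= X]expr2 ler_pM // Nge0.
  have hLP : 2^-1 * Lg * N (y - t) ^+ 2 <= `|Lg| * C ^+ 2 * `|t - y| ^+ 2.
    apply: (le_trans (y := `|Lg| * N (y - t) ^+ 2)).
      rewrite ler_wpM2r ?exprn_ge0 ?Nge0 //.
      have := ler_norm Lg; have := normr_ge0 Lg; lra.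
    by rewrite -mulrA ler_wpM2l.
  have n0 : 0 <= `|t - y| by [].
  have e1 : 0 <= `|Lg| * C ^+ 2 * `|t - y| by rewrite !mulr_ge0 // exprn_ge0.
  have e2 : 0 <= W * `|t - y| ^+ 2 by rewrite mulr_ge0 // exprn_ge0.
  move: low up hI hLP e1 e2.
  rewrite !mulrDl.
  set I := inner _ _; set P := 2^-1 * _; set Wn := W * _; set Wn2 := W * _.
  set Ln := _ * `|t - y|; set Ln2 := _ * (_ ^+ 2).
  move=> low up hI hLP e1 e2.
  rewrite ler_norml; apply/andP; split; move: hI; rewrite ler_norml => /andP[h1 h2]; lra.
have Zne : Z !=set0 by exists (x 0%N).
have [c cZc cmin] := compact_EVT_min Zne compZ gcont.
rewrite inE in cZc.
have glb : forall z, Z z -> g c <= g z by move=> z Zz; apply: cmin; rewrite inE.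
have gs : gstar g Z = g c.
  rewrite /gstar; apply/le_anti/andP; split.
    by apply: ge_inf; [exists (g c) => _ [z Zz <-]; exact: glb | exists c].
  by apply: lb_le_inf; [exists (g c), c | move=> _ [z Zz <-]; exact: glb].
have fw : fw_gap gradf (argmin_set g Z) (x k) <= inner (gradf (x k)) (x k - s k).
  apply: ge_sup.
    by exists (inner (gradf (x k)) (x k - c)); exists c => //; split => //; rewrite gs.
  move=> _ [z [Zz gz] <-].
  rewrite !innerBr lerD2l lerN2; apply: hmin; split => //.
  have := @conv_grad R d g Z (x k) z _ cg Zxk Zz (dg (x k) (z - x k) (ZU _ Zxk)).
  have : g z <= g (x 0%N) by rewrite gz gs; exact: glb.
  lra.
have hgf : gamma k * fw_gap gradf (argmin_set g Z) (x k)
    <= gamma k * (inner (gradf (x k)) (x k) - inner (gradf (x k)) (s k)).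
  by rewrite ler_wpM2l // -innerBr.
have iv : inner (gradf (x k)) v
    = - (gamma k * (inner (gradf (x k)) (x k) - inner (gradf (x k)) (s k))).
  by rewrite /v innerZr innerBr; ring.
rewrite xk1.
have -> : 2^-1 * gamma k ^+ 2 * Lf * D ^+ 2 = 2^-1 * (gamma k ^+ 2 * Lf * D ^+ 2) by ring.
have e1 : 2^-1 * Lf * N v ^+ 2 = 2^-1 * (Lf * N v ^+ 2) by ring.
rewrite e1 iv in fd.
move: fd hgf qf.
set A := Lf * N v ^+ 2; set B := gamma k ^+ 2 * Lf * D ^+ 2.
set J := gamma k * (_ - _); set F := gamma k * fw_gap _ _ _.
move=> *; lra.
Qed.
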